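(* Let $\varphi(x)=a_nx^n+\cdots+a_0\in\mathbb{C}[x]$, $a_n\ne0$, have $n$ distinct roots $x_1,\dots,x_n$, let $R\subset\mathbb{C}(x)$ be the subring of rational functions defined at all roots of $\varphi$, and let $h\in R$. If $r(x)=b_{n-1}x^{n-1}+\cdots+b_0$ is the unique polynomial of degree $<n$ representing the coset of $\varphi'(x)h(x)$ in $R/(\varphi)$, then $\sum_{i=1}^nh(x_i)=\dfrac{b_{n-1}}{a_n}$.
   Context: $(\varphi)$ denotes the ideal generated by $\varphi$ in $R$; $R/(\varphi)\cong\mathbb{C}[x]/(\varphi)$. *)

(* Defs.v *)
From HB Require Import structures.
From mathcomp Require Import all_boot all_order all_algebra.
From Stdlib Require Import ClassicalEpsilon.
Set Implicit Arguments. Unset Strict Implicit. Unset Printing Implicit Defensive.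
Import Order.TTheory GRing.Theory Num.Theory.
Local Open Scope ring_scope.
Notation "x %:F" := (@FracField.tofrac _ x) : ring_scope.

Definition ratfun (F : fieldType) := {fraction {poly F}}.

Definition ratf_defined_at (F : fieldType) (h : ratfun F) (a : F) : Prop :=
  exists p q : {poly F}, q.[a] != 0 /\ h = p%:F / q%:F.

Definition in_R (F : fieldType) (phi : {poly F}) (h : ratfun F) : Prop :=
  exists p q : {poly F}, (forall a, root phi a -> q.[a] != 0) /\ h = p%:F / q%:F.

(* Value h(a) := p(a)/q(a) for a representation h = p/q with q(a) <> 0
   (well defined; the choice of representation is made by epsilon). *)
Definition ratf_eval (F : fieldType) (h : ratfun F) (a : F) : F :=
  let pq := epsilon (inhabits ((0 : {poly F}), (1 : {poly F})))
              (fun pq : {poly F} * {poly F} =>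
                 pq.2.[a] != 0 /\ h = pq.1%:F / pq.2%:F) in
  pq.1.[a] / pq.2.[a].

(* Main.v *)
Require Import Defs.
From HB Require Import structures.
From mathcomp Require Import all_boot all_order all_algebra.
From Stdlib Require Import ClassicalEpsilon.
Import Order.TTheory GRing.Theory Num.Theory.
Set Implicit Arguments. Unset Strict Implicit. Unset Printing Implicit Defensive.
Local Open Scope ring_scope.

Section S.
Variable C : numClosedFieldType.

Lemma frac_eq (p q p' q' : {poly C}) : q != 0 -> q' != 0 ->
  p%:F / q%:F = p'%:F / q'%:F -> p * q' = p' * q.
Proof.
move=> q0 q'0 /eqP; rewrite eqr_div ?tofrac_eq0 // -!tofracM tofrac_eq.
by move/eqP.
Qed.

Lemma eval_repr (h : ratfun C) a p q : q.[a] != 0 -> h = p%:F / q%:F ->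
  ratf_eval h a = p.[a] / q.[a].
Proof.
move=> qa hE; rewrite /ratf_eval.
set P := (fun pq : {poly C} * {poly C} => _).
have [] : P (epsilon (inhabits (0, 1)) P).
  by apply: epsilon_spec; exists (p, q).
move: (epsilon _ P) => [p1 q1] /= q1a h1.
have nz : forall (s : {poly C}) b, s.[b] != 0 -> s != 0.
  by move=> s b; apply: contraNneq => ->; rewrite horner0.
have := frac_eq (nz _ _ q1a) (nz _ _ qa) (etrans (esym h1) hE).
move/(congr1 (horner^~ a)); rewrite !hornerM => E.
by apply/eqP; rewrite eqr_div // E.
Qed.

Lemma sizeQ n (x : 'I_n -> C) (P : pred 'I_n) :
  size (\prod_(j | P j) ('X - (x j)%:P)) = #|P|.+1.
Proof.
rewrite size_prod; last by move=> j _; rewrite polyXsubC_eq0.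
under eq_bigr do rewrite size_XsubC.
rewrite sum_nat_const.
by rewrite muln2 -addnn -addSn addnK.
Qed.


Variables (n : nat) (x : 'I_n -> C).
Hypothesis xinj : injective x.
Hypothesis n0 : (0 < n)%N.

Lemma zero_of_roots (p : {poly C}) : (size p <= n)%N -> (forall i, root p (x i)) -> p = 0.
Proof.
move=> sp rp; apply: (@roots_geq_poly_eq0 _ _ (map x (enum 'I_n))).
- by apply/allP => y /mapP [i _ ->].
- by rewrite map_inj_uniq // enum_uniq.
- by rewrite size_map size_enum_ord.
Qed.

Definition Pi := \prod_(j < n) ('X - (x j)%:P).
Definition Q i := \prod_(j | j != i) ('X - (x j)%:P).
Definition c i := \prod_(j | j != i) (x i - x j).

Lemma size_Pi : size Pi = n.+1.
Proof. by rewrite /Pi sizeQ card_ord. Qed.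

Lemma monic_Pi : Pi \is monic.
Proof. by apply: monic_prod => j _; apply: monicXsubC. Qed.

Lemma Pi_root i : root Pi (x i).
Proof. by rewrite /root /Pi horner_prod (bigD1 i) //= hornerXsubC subrr mul0r. Qed.

Lemma phi_factor (phi : {poly C}) : size phi = n.+1 -> (forall i, root phi (x i)) ->
  phi = lead_coef phi *: Pi.
Proof.
move=> sphi rphi; apply/eqP; rewrite -subr_eq0; apply/eqP/zero_of_roots.
  apply/leq_sizeP => j; rewrite leq_eqVlt => /orP [/eqP <- | ltnj].
    rewrite coefB coefZ lead_coefE sphi /=.
    have := monic_Pi; rewrite qualifE /= lead_coefE size_Pi /= => /eqP ->.
    by rewrite mulr1 subrr.
  by rewrite coefB coefZ !nth_default ?mulr0 ?subrr // ?size_Pi ?sphi.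
move=> i; rewrite /root hornerD hornerN hornerZ.
by move: (rphi i) (Pi_root i); rewrite /root => /eqP -> /eqP ->; rewrite mulr0 subrr.
Qed.

Lemma c_neq0 i : c i != 0.
Proof.
apply/prodf_neq0 => j ji; rewrite subr_eq0; apply: contra ji => /eqP /xinj ->.
by [].
Qed.

Lemma Qx i k : (Q i).[x k] = if k == i then c i else 0.
Proof.
rewrite /Q horner_prod; case: eqP => [-> | /eqP ki].
  by apply: eq_bigr => j _; rewrite hornerXsubC.
by rewrite (bigD1 k) //= hornerXsubC subrr mul0r.
Qed.

Lemma Pi_split i : Pi = ('X - (x i)%:P) * Q i.
Proof. by rewrite /Pi (bigD1 i). Qed.

Lemma deriv_phi (phi : {poly C}) i : size phi = n.+1 -> (forall i, root phi (x i)) ->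
  phi^`().[x i] = lead_coef phi * c i.
Proof.
move=> sphi rphi; rewrite {1}(phi_factor sphi rphi) derivZ (Pi_split i) derivM derivXsubC.
rewrite hornerZ hornerD !hornerM hornerXsubC subrr mul0r addr0 hornerC mul1r.
by rewrite Qx eqxx.
Qed.

Lemma size_Q i : size (Q i) = n.
Proof. by rewrite /Q sizeQ cardC1 card_ord prednK. Qed.

Lemma coef_Q i : (Q i)`_n.-1 = 1.
Proof.
have : Q i \is monic by apply: monic_prod => j _; apply: monicXsubC.
by rewrite qualifE /= lead_coefE size_Q => /eqP.
Qed.

Lemma lagrange (r : {poly C}) : (size r <= n)%N ->
  r = \sum_i (r.[x i] / c i) *: Q i.
Proof.
move=> sr; apply/eqP; rewrite -subr_eq0; apply/eqP/zero_of_roots.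
  apply: leq_trans (size_polyD _ _) _; rewrite geq_max sr size_polyN.
  apply: (big_ind (fun p : {poly C} => size p <= n)%N).
  - by rewrite size_poly0.
  - by move=> p q sp sq; apply: leq_trans (size_polyD _ _) _; rewrite geq_max sp.
  - by move=> i _; apply: leq_trans (size_scale_leq _ _) _; rewrite size_Q.
move=> k; rewrite /root hornerD hornerN horner_sum (bigD1 k) //= hornerZ Qx eqxx.
rewrite divfK ?c_neq0 // big1 ?addr0 ?subrr //.
by move=> i ik; rewrite hornerZ Qx eq_sym (negPf ik) mulr0.
Qed.

Lemma lagrange_coef (r : {poly C}) : (size r <= n)%N ->
  r`_n.-1 = \sum_i r.[x i] / c i.
Proof.
move=> sr; rewrite {1}(lagrange sr) coef_sum.
by apply: eq_bigr => i _; rewrite coefZ coef_Q mulr1.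
Qed.
End S.
Lemma alg_id (F : fieldType) (A P Q Q2 R Phi P2 h g : F) : Q != 0 -> Q2 != 0 ->
  h = P / Q -> g = P2 / Q2 -> A * h - R = Phi * g ->
  A * P * Q2 - R * Q * Q2 = Phi * P2 * Q.
Proof.
move=> Q0 Q20 -> -> H.
transitivity ((A * (P / Q) - R) * Q * Q2).
  by rewrite !mulrBl mulrA divfK.
by rewrite H mulrAC mulrA divfK.
Qed.

Lemma scal_id (F : fieldType) (D Pv Q2v Rv Qv Y Z : F) : Qv != 0 -> Q2v != 0 -> D != 0 ->
  D * Pv * Q2v - Rv * Qv * Q2v = 0 * Y * Z -> Pv / Qv = Rv / D.
Proof.
move=> Q0 Q20 D0; rewrite !mul0r => /eqP; rewrite subr_eq0 => /eqP E.
apply/eqP; rewrite eqr_div //; apply/eqP.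
apply: (mulIf Q20); by rewrite [Pv * D]mulrC E.
Qed.

Unset Implicit Arguments.
Set Strict Implicit.
Theorem corollary9p3 (C : numClosedFieldType) (n : nat) (phi : {poly C})
    (x : 'I_n -> C) (h : ratfun C) (r : {poly C}) :
  (0 < n)%N ->
  size phi = n.+1 ->
  injective x ->
  (forall i, root phi (x i)) ->
  in_R phi h ->
  (size r <= n)%N ->
  (exists g : ratfun C, in_R phi g /\ (phi^`())%:F * h - r%:F = phi%:F * g) ->
  \sum_(i < n) ratf_eval h (x i) = r`_n.-1 / lead_coef phi.
Proof.
move=> n0 sphi xinj rphi [p [q [qr hE]]] sr [g [[p2 [q2 [q2r gE]]] H]].
have nz : forall (s : {poly C}) b, s.[b] != 0 -> s != 0.
  by move=> s b; apply: contraNneq => ->; rewrite horner0.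
have q0 : q != 0 by apply: (nz _ (x (Ordinal n0))); apply: qr.
have q20 : q2 != 0 by apply: (nz _ (x (Ordinal n0))); apply: q2r.
have E : phi^`() * p * q2 - r * q * q2 = phi * p2 * q.
  apply/eqP; rewrite -tofrac_eq (tofracB (phi^`() * p * q2)) (tofracM (phi^`() * p) q2).
  rewrite (tofracM (phi^`()) p) (tofracM (r * q) q2) (tofracM r q).
  rewrite (tofracM (phi * p2) q) (tofracM phi p2); apply/eqP.
  have Q0 : q%:F != 0 by rewrite tofrac_eq0.
  have Q20 : q2%:F != 0 by rewrite tofrac_eq0.
  exact: alg_id Q0 Q20 hE gE H.
have a0 : lead_coef phi != 0.
  by rewrite lead_coef_eq0 -size_poly_eq0 sphi.
have ev : forall i, ratf_eval h (x i) = r.[x i] / (lead_coef phi * c x i).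
  move=> i; rewrite (eval_repr (qr _ (rphi i)) hE).
  have d0 : lead_coef phi * c x i != 0 by rewrite mulf_neq0 ?c_neq0.
  have := congr1 (horner^~ (x i)) E.
  rewrite /= !(hornerD, hornerN, hornerM) (eqP (rphi i)) -(deriv_phi xinj i sphi rphi).
  apply: scal_id; [exact: qr | exact: q2r | by rewrite (deriv_phi xinj)].
rewrite (lagrange_coef xinj n0 sr) mulr_suml; apply: eq_bigr => i _.
by rewrite ev invfM mulrA mulrAC.
Qed.
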